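(* Let $k\ge2$, $\lambda>0$, $0<\theta<1$, $a=\lambda^{1/k}$, and $\gamma(u)=a(1+\theta)-u+\frac{u-a\theta}{1+u^k}$, which maps $[a\theta,a]$ into itself and has a unique fixed point $\xi\in(a\theta,a)$. If either $\theta\ge\frac{k-1}{k}$, or $\theta<\frac{k-1}{k}$ and $\lambda<\frac{1}{k-1-k\theta}$, then $\lim_{n\to\infty}\gamma^{(n)}(\xi_0)=\xi$ for every $\xi_0\in[a\theta,a]$, where $\gamma^{(n)}$ denotes the $n$-fold iterate of $\gamma$. *)

(* Defs.v *)
From Stdlib Require Import Reals.
Open Scope R_scope.

Definition aval (k : nat) (lam : R) : R := Rpower lam (/ INR k).

Definition gam (k : nat) (lam theta : R) (u : R) : R :=
  let a := aval k lam in
  a * (1 + theta) - u + (u - a * theta) / (1 + u ^ k).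

(* Main.v *)
Require Import Defs.
From Stdlib Require Import Reals Lra Lia.
From Coquelicot Require Import Coquelicot.
Open Scope R_scope.

Definition gd (k : nat) (B x : R) : R :=
  -1 + ((1 + x^k) - (x - B) * (INR k * x ^ Init.Nat.pred k)) /
       ((1 + x^k) * (1 + x^k)).

Lemma gam_deriv k lam theta x : 0 <= x ->
  derivable_pt_lim (gam k lam theta) x (gd k (aval k lam * theta) x).
Proof.
  intros hx. apply is_derive_Reals. unfold gam, gd.
  assert (hq : 0 <= x ^ k) by (apply pow_le; lra).
  auto_derive. lra. field. lra.
Qed.

Lemma gd_bound k lam B x dl :
  (1 <= k)%nat -> 0 <= B <= x -> x ^ k <= lam -> 0 < dl ->
  x ^ Init.Nat.pred k * ((INR k - 1) * x - INR k * B) <= 1 - dl ->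
  -1 + dl / ((1 + lam) * (1 + lam)) <= gd k B x <= 0.
Proof.
  intros hk hB hq hdl H. unfold gd.
  set (pp := x ^ Init.Nat.pred k).
  assert (hpq : x ^ k = x * pp).
  { unfold pp. destruct k; [lia|]. simpl. reflexivity. }
  rewrite hpq in *.
  assert (hp : 0 <= pp) by (apply pow_le; lra).
  assert (hK : 0 <= INR k) by apply pos_INR.
  assert (hxp : 0 <= x * pp) by nra.
  set (q := x * pp) in *.
  assert (hD : 0 < (1 + q) * (1 + q)) by nra.
  set (N := (1 + q - (x - B) * (INR k * pp))).
  assert (hN : dl <= N).
  { assert (N = 1 - pp * ((INR k - 1) * x - INR k * B)) by (unfold N, q; ring). fold pp in H. lra. }
  assert (hN2 : N <= (1 + q) * (1 + q)).
  { unfold N. assert (0 <= (x - B) * (INR k * pp)) by (apply Rmult_le_pos; nra). nra. }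
  split.
  - apply Rplus_le_compat_l.
    apply Rle_trans with (dl / ((1 + q) * (1 + q))).
    + unfold Rdiv. apply Rmult_le_compat_l; [lra|].
      apply Rinv_le_contravar; [exact hD|]. nra.
    + unfold Rdiv. apply Rmult_le_compat_r; [left; apply Rinv_0_lt_compat; exact hD|lra].
  - assert (N / ((1 + q) * (1 + q)) <= 1).
    { apply (Rmult_le_reg_r ((1 + q) * (1 + q))); [exact hD|].
      unfold Rdiv. rewrite Rmult_assoc, Rinv_l by lra. lra. }
    lra.
Qed.

Theorem mainTheorem10 (k : nat) (lam theta xi : R)
  (hk : (2 <= k)%nat) (hlam : 0 < lam) (ht0 : 0 < theta) (ht1 : theta < 1)
  (hxi : aval k lam * theta < xi < aval k lam)
  (hfix : gam k lam theta xi = xi)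
  (hcond : (INR k - 1) / INR k <= theta \/
           (theta < (INR k - 1) / INR k /\ lam < / (INR k - 1 - INR k * theta))) :
  forall xi0 : R, aval k lam * theta <= xi0 <= aval k lam ->
    Un_cv (fun n : nat => Nat.iter n (gam k lam theta) xi0) xi.
Proof.
  intros xi0 hx0.
  set (a := aval k lam) in *.
  assert (ha : 0 < a) by (unfold a, aval, Rpower; apply exp_pos).
  assert (hak : a ^ k = lam).
  { unfold a, aval. rewrite <- Rpower_pow by (unfold Rpower; apply exp_pos).
    rewrite Rpower_mult. rewrite Rinv_l. apply Rpower_1; lra.
    apply not_0_INR; lia. }
  assert (hK : 2 <= INR k) by (apply (le_INR 2); lia).
  assert (hdel : exists dl, 0 < dl /\ dl <= 1 /\ forall x, a * theta <= x <= a ->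
            x ^ Init.Nat.pred k * ((INR k - 1) * x - INR k * (a * theta)) <= 1 - dl).
  { destruct hcond as [h1 | [h1 h2]].
    - exists 1. split; [lra|]. split; [lra|]. intros x hx.
      assert (hkt : INR k - 1 <= INR k * theta).
      { assert (INR k - 1 = INR k * ((INR k - 1) / INR k)) by (field; lra).
        apply (Rmult_le_compat_l (INR k)) in h1; lra. }
      assert (0 <= x ^ Init.Nat.pred k) by (apply pow_le; nra).
      assert ((INR k - 1) * x - INR k * (a * theta) <= 0) by nra. nra.
    - set (m := INR k - 1 - INR k * theta).
      assert (hm : 0 < m).
      { unfold m. assert (INR k - 1 = INR k * ((INR k - 1) / INR k)) by (field; lra).
        apply (Rmult_lt_compat_l (INR k)) in h1; lra. }
      assert (hlm : lam * m < 1).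
      { apply (Rmult_lt_compat_r m) in h2; [|exact hm].
        rewrite Rinv_l in h2 by lra. exact h2. }
      exists (1 - lam * m). split; [lra|]. split; [nra|]. intros x hx.
      assert (hp0 : 0 <= x ^ Init.Nat.pred k) by (apply pow_le; nra).
      assert (hpa : x ^ Init.Nat.pred k <= a ^ Init.Nat.pred k)
        by (apply pow_incr; nra).
      assert (hlam' : lam = a ^ Init.Nat.pred k * a).
      { rewrite <- hak. destruct k; [lia|]. simpl. ring. }
      destruct (Rle_lt_dec ((INR k - 1) * x - INR k * (a * theta)) 0) as [hn|hn].
      + assert (0 <= lam * m) by nra. nra.
      + assert (hb : (INR k - 1) * x - INR k * (a * theta) <= a * m).
        { unfold m. nra. }
        apply Rle_trans with (a ^ Init.Nat.pred k * (a * m)).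
        * apply Rmult_le_compat; lra.
        * rewrite hlam'. nra. }
  destruct hdel as [dl [hdl [hdl1 Hdl]]].
  set (c := 1 - dl / ((1 + lam) * (1 + lam))).
  assert (hc0 : 0 <= c /\ c < 1).
  { unfold c. assert (0 < (1 + lam) * (1 + lam)) by nra.
    split.
    -       assert (dl / ((1 + lam) * (1 + lam)) <= 1).
      { apply (Rmult_le_reg_r ((1 + lam) * (1 + lam))); [lra|].
        unfold Rdiv. rewrite Rmult_assoc, Rinv_l by lra. nra. }
      lra.
    - assert (0 < dl / ((1 + lam) * (1 + lam))) by (apply Rdiv_lt_0_compat; lra). lra. }
  assert (hmap : forall u, a * theta <= u <= a -> a * theta <= gam k lam theta u <= a).
  { intros u hu. unfold gam. fold a.
    assert (hq : 0 <= u ^ k) by (apply pow_le; nra).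
    assert (hd : 0 <= (u - a * theta) / (1 + u ^ k)) by (apply Rdiv_le_0_compat; nra).
    assert ((u - a * theta) / (1 + u ^ k) <= u - a * theta).
    { apply (Rmult_le_reg_r (1 + u ^ k)); [lra|]. unfold Rdiv.
      rewrite Rmult_assoc, Rinv_l by lra. nra. }
    lra. }
  assert (hder : forall x, a * theta <= x <= a ->
             Rabs (gd k (a * theta) x) <= c).
  { intros x hx.
    assert (hxk : x ^ k <= lam) by (rewrite <- hak; apply pow_incr; nra).
    destruct (gd_bound k lam (a * theta) x dl ltac:(lia) ltac:(nra) hxk hdl (Hdl x hx)).
    rewrite Rabs_left1 by lra. unfold c. lra. }
  assert (hcon : forall u, a * theta <= u <= a ->
            Rabs (gam k lam theta u - xi) <= c * Rabs (u - xi)).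
  { intros u hu. rewrite <- hfix at 1.
    destruct (Rtotal_order u xi) as [hl | [he | hg]].
    - destruct (MVT_cor2 (gam k lam theta) (gd k (a * theta)) u xi hl) as [z [hz1 hz2]].
      { intros z hz. apply gam_deriv. nra. }
      replace (gam k lam theta u - gam k lam theta xi) with
        (- (gam k lam theta xi - gam k lam theta u)) by ring.
      rewrite hz1, Rabs_Ropp, Rabs_mult.
      replace (Rabs (u - xi)) with (Rabs (xi - u))
        by (rewrite <- Rabs_Ropp; f_equal; ring).
      apply Rmult_le_compat_r; [apply Rabs_pos|]. apply hder. lra.
    - subst u. rewrite !Rminus_diag, Rabs_R0. lra.
    - destruct (MVT_cor2 (gam k lam theta) (gd k (a * theta)) xi u hg) as [z [hz1 hz2]].
      { intros z hz. apply gam_deriv. nra. }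
      rewrite hz1, Rabs_mult.
      apply Rmult_le_compat_r; [apply Rabs_pos|]. apply hder. lra. }
  assert (hit : forall n, a * theta <= Nat.iter n (gam k lam theta) xi0 <= a /\
     Rabs (Nat.iter n (gam k lam theta) xi0 - xi) <= c ^ n * Rabs (xi0 - xi)).
  { induction n as [|n [IH1 IH2]].
    - simpl. split; [lra|]. lra.
    - simpl. split; [apply hmap; exact IH1|].
      apply Rle_trans with (c * Rabs (Nat.iter n (gam k lam theta) xi0 - xi)).
      + apply hcon; exact IH1.
      + rewrite Rmult_assoc. apply Rmult_le_compat_l; lra. }
  intros eps heps.
  destruct (Req_dec (Rabs (xi0 - xi)) 0) as [h0 | h0].
  - exists 0%nat. intros n _. unfold Rdist. destruct (hit n) as [_ h].
    rewrite h0, Rmult_0_r in h. lra.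
  - assert (hpos : 0 < Rabs (xi0 - xi)) by (pose proof (Rabs_pos (xi0 - xi)); lra).
    destruct (pow_lt_1_zero c ltac:(rewrite Rabs_right by lra; lra)
               (eps / Rabs (xi0 - xi)) ltac:(apply Rdiv_lt_0_compat; lra)) as [N HN].
    exists N. intros n hn. unfold Rdist. destruct (hit n) as [_ h].
    specialize (HN n hn). rewrite Rabs_right in HN by (apply Rle_ge, pow_le; lra).
    apply Rle_lt_trans with (c ^ n * Rabs (xi0 - xi)); [exact h|].
    apply (Rmult_lt_compat_r (Rabs (xi0 - xi))) in HN; [|exact hpos].
    unfold Rdiv in HN. rewrite Rmult_assoc, Rinv_l, Rmult_1_r in HN by lra. exact HN.
Qed.
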